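(* Let $G$ be a finite connected graph and $v$ a vertex of valence two whose two adjacent edges $e_1\neq e_2$ are distinct. Let $G^v$ be the graph obtained by replacing the segment $e_1ve_2$ by a single new edge $e_v$ (so $V(G^v)=V(G)\setminus\{v\}$, $E(G^v)=\{e_v\}\cup E(G)\setminus\{e_1,e_2\}$, with $e_v$ joining the endpoints of $e_1,e_2$ other than $v$). Then $\mathrm{cX}(G)$ and $\mathrm{cX}(G^v)$ are homotopy equivalent.
   Context: Graphs may have loops and multiple edges; subgraphs are edge-induced. $\mathrm{cX}(G)$ is the poset, under inclusion, of proper connected subgraphs $H\neq G$ of $G$ with non-trivial fundamental group. Topological properties of posets refer to geometric realisations of order complexes. *)

(* Defs.v *)
From Stdlib Require Import Reals.
From mathcomp Require Import all_boot.
Set Implicit Arguments. Unset Strict Implicit. Unset Printing Implicit Defensive.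

(* Each edge e has endpoints src e and tgt e (the orientation is irrelevant;
   a loop has src e = tgt e). *)
Record graph := Graph {
  gV : finType;
  gE : finType;
  src : gE -> gV;
  tgt : gE -> gV }.

Section GraphDefs.
Variable G : graph.

Definition incident (e : gE G) (x : gV G) : bool := (src e == x) || (tgt e == x).

(* valence: a loop counts twice *)
Definition valence (x : gV G) : nat :=
  \sum_(e : gE G) ((src e == x) + (tgt e == x)).

(* the endpoint of e other than x (meaningful when e is incident to x) *)
Definition other_end (e : gE G) (x : gV G) : gV G :=
  if src e == x then tgt e else src e.

Definition adj_in (S : {set gE G}) : rel (gV G) :=
  fun x y => [exists e in S, ((src e == x) && (tgt e == y)) ||
                             ((src e == y) && (tgt e == x))].

Definition connected_graph : Prop :=
  (0 < #|gV G|) /\ forall x y : gV G, connect (adj_in [set: gE G]) x y.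

Definition sub_vertices (S : {set gE G}) : {set gV G} :=
  [set x | [exists e in S, incident e x]].

Definition sub_connected (S : {set gE G}) : bool :=
  (0 < #|sub_vertices S|) &&
  [forall x in sub_vertices S, forall y in sub_vertices S, connect (adj_in S) x y].

(* rank of the (free) fundamental group of a connected graph: |E| - |V| + 1 *)
Definition pi1_rank (S : {set gE G}) : nat := #|S| + 1 - #|sub_vertices S|.

(* cX(G): proper connected edge-induced subgraphs with nontrivial pi_1,
   represented by their edge sets; ordered by inclusion. *)
Definition cX : pred {set gE G} :=
  fun S => [&& S \proper [set: gE G], sub_connected S & 0 < pi1_rank S].

End GraphDefs.

(* G^v : vertices {x | x != v}; edges: None = the new edge e_v,
   Some e for e not in {e1, e2}.  a', b' are the far endpoints of e1, e2. *)
Section Smooth.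
Variables (G : graph) (v : gV G) (e1 e2 : gE G) (a' b' : {x : gV G | x != v}).

Definition smV : finType := {x : gV G | x != v}.
Definition smE : finType := option {e : gE G | e \notin [set e1; e2]}.

Definition sm_src (f : smE) : smV :=
  match f with None => a' | Some e => insubd a' (src (val e)) end.
Definition sm_tgt (f : smE) : smV :=
  match f with None => b' | Some e => insubd a' (tgt (val e)) end.

Definition smooth : graph := @Graph smV smE sm_src sm_tgt.
End Smooth.

Local Open Scope R_scope.

(* |Delta(P)| for the subposet P of (T, le): points x : T -> R, x >= 0,
   supported on P, summing to 1, with support a chain.  Topology: subspace of R^T. *)
Definition realization (T : finType) (P : pred T) (le : rel T) (x : T -> R) : Prop :=
  (forall t, 0 <= x t) /\ (forall t, ~~ P t -> x t = 0) /\
  \big[Rplus/0]_(t : T) x t = 1 /\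
  (forall s t, 0 < x s -> 0 < x t -> le s t \/ le t s).

Definition maps_into (I J : finType) (A : (I -> R) -> Prop) (B : (J -> R) -> Prop)
  (f : (I -> R) -> (J -> R)) : Prop := forall x, A x -> B (f x).

Definition continuous_on (I J : finType) (A : (I -> R) -> Prop)
  (f : (I -> R) -> (J -> R)) : Prop :=
  forall x, A x -> forall eps, 0 < eps -> exists delta, 0 < delta /\
    forall y, A y -> (forall i, Rabs (y i - x i) < delta) ->
      forall j, Rabs (f y j - f x j) < eps.

Definition homotopic (I J : finType) (A : (I -> R) -> Prop) (B : (J -> R) -> Prop)
  (f g : (I -> R) -> (J -> R)) : Prop :=
  exists H : R -> (I -> R) -> (J -> R),
    (forall t x, 0 <= t <= 1 -> A x -> B (H t x)) /\
    (forall t x, 0 <= t <= 1 -> A x -> forall eps, 0 < eps -> exists delta, 0 < delta /\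
       forall s y, 0 <= s <= 1 -> A y -> Rabs (s - t) < delta ->
         (forall i, Rabs (y i - x i) < delta) ->
         forall j, Rabs (H s y j - H t x j) < eps) /\
    (forall x, A x -> H 0 x = f x) /\ (forall x, A x -> H 1 x = g x).

Definition homotopy_equivalent (I J : finType) (A : (I -> R) -> Prop)
  (B : (J -> R) -> Prop) : Prop :=
  exists (f : (I -> R) -> (J -> R)) (g : (J -> R) -> (I -> R)),
    maps_into A B f /\ maps_into B A g /\ continuous_on A f /\ continuous_on B g /\
    homotopic A A (fun x => g (f x)) (fun x => x) /\
    homotopic B B (fun y => f (g y)) (fun y => y).

Definition cX_space (G : graph) : ({set gE G} -> R) -> Prop :=
  realization (@cX G) (fun S T : {set gE G} => S \subset T).

(* Main.v *)
Require Import Defs.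
From Stdlib Require Import Reals Lra Classical FunctionalExtensionality.
From mathcomp Require Import all_boot zify.
From HB Require Import structures.
Set Implicit Arguments. Unset Strict Implicit. Unset Printing Implicit Defensive.

Lemma connect_hom (T U : finType) (r : rel T) (r' : rel U) (h : T -> U) :
  (forall x y, r x y -> connect r' (h x) (h y)) ->
  forall x y, connect r x y -> connect r' (h x) (h y).
Proof.
move=> H x y /connectP [p pth ->]. elim: p x pth => [|z p IH] x /=.
  by move=> _; exact: connect0.
move=> /andP [rxz pth]. exact: connect_trans (H _ _ rxz) (IH _ pth).
Qed.

Lemma adj_sym (G : graph) (S : {set gE G}) : symmetric (adj_in S).
Proof. move=> x y; rewrite /adj_in; apply: eq_existsb => e; by rewrite [X in _ && X]orbC. Qed.

Lemma adj_edge (G : graph) (S : {set gE G}) e : e \in S -> adj_in S (src e) (tgt e).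
Proof. move=> he; apply/existsP; exists e; by rewrite he !eqxx. Qed.

Lemma properT_ex (T : finType) (A : {set T}) : A \proper setT <-> exists x, x \notin A.
Proof.
rewrite properE subsetT /=; split.
  by move/subsetPn => [x _ hx]; exists x.
move=> [x hx]; apply/subsetPn; by exists x.
Qed.

Lemma in_verts (G : graph) (S : {set gE G}) e x : e \in S -> incident e x -> x \in sub_vertices S.
Proof. move=> he hi; rewrite inE; apply/existsP; exists e; by rewrite he. Qed.

Lemma sub_conn_P (G : graph) (S : {set gE G}) :
  sub_connected S -> forall x y, x \in sub_vertices S -> y \in sub_vertices S ->
  connect (adj_in S) x y.
Proof.
move=> /andP [_ /forallP H] x y hx hy.
by move: (H x) => /implyP /(_ hx) /forallP /(_ y) /implyP /(_ hy).
Qed.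

Lemma sub_conn_I (G : graph) (S : {set gE G}) :
  (exists x, x \in sub_vertices S) ->
  (forall x y, x \in sub_vertices S -> y \in sub_vertices S -> connect (adj_in S) x y) ->
  sub_connected S.
Proof.
move=> [x0 hx0] H; apply/andP; split.
  by rewrite card_gt0; apply/set0Pn; exists x0.
apply/forallP => x; apply/implyP => hx; apply/forallP => y; apply/implyP => hy; exact: H.
Qed.

Section GraphPart.
Variables (G : graph) (v : gV G) (e1 e2 : gE G) (a' b' : {x : gV G | x != v}).
Hypotheses (hval : valence v = 2) (h12 : e1 != e2) (i1 : incident e1 v) (i2 : incident e2 v)
  (ha : val a' = other_end e1 v) (hb : val b' = other_end e2 v).

Local Notation G' := (smooth e1 e2 a' b').
Local Notation sub := {e : gE G | e \notin [set e1; e2]}.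

Lemma far_ok e : e \notin [set e1; e2] -> (src e != v) && (tgt e != v).
Proof.
rewrite !inE negb_or => /andP [ne1 ne2].
move: hval; rewrite /valence (bigD1 e1) // (bigD1 e2) /=; last by rewrite eq_sym.
rewrite (bigD1 e) /=; last by rewrite ne1 ne2.
move: i1 i2; rewrite /incident.
case: (src e1 == v); case: (tgt e1 == v); case: (src e2 == v); case: (tgt e2 == v);
  case: (src e == v); case: (tgt e == v) => //= _ _; lia.
Qed.

Lemma ends_of e (w : gV G) : incident e v -> other_end e v = w ->
  (src e = v /\ tgt e = w) \/ (tgt e = v /\ src e = w).
Proof.
rewrite /incident /other_end. case: eqP => [-> _ <-|_ /= /eqP -> <-]; [left|right]; done.
Qed.

Lemma ends1 : (src e1 = v /\ tgt e1 = val a') \/ (tgt e1 = v /\ src e1 = val a').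
Proof. exact: ends_of i1 (esym ha). Qed.
Lemma ends2 : (src e2 = v /\ tgt e2 = val b') \/ (tgt e2 = v /\ src e2 = val b').
Proof. exact: ends_of i2 (esym hb). Qed.

Lemma e1_in : e1 \in [set e1; e2]. Proof. by rewrite !inE eqxx. Qed.
Lemma e2_in : e2 \in [set e1; e2]. Proof. by rewrite !inE eqxx orbT. Qed.

Definition phi (S : {set gE G}) : {set gE G'} :=
  [set o : gE G' | match o with None => (e1 \in S) && (e2 \in S) | Some u => val u \in S end].
Definition psi (S' : {set gE G'}) : {set gE G} := [set e | (insub e : gE G') \in S'].

Lemma phi_psi S' : phi (psi S') = S'.
Proof.
apply/setP => [[u|]]; rewrite !inE.
  by rewrite valK.
by rewrite !insubN ?andbb // negbK ?e1_in ?e2_in.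
Qed.

Lemma psi_phi_sub (S : {set gE G}) : psi (phi S) \subset S.
Proof.
apply/subsetP => e; rewrite !inE. case: insubP => [u _ <-|].
  by [].
rewrite negbK !inE => /orP [] /eqP -> /andP [] //.
Qed.

Lemma phi_mono (S T : {set gE G}) : S \subset T -> phi S \subset phi T.
Proof.
move=> /subsetP st; apply/subsetP => [[u|]]; rewrite !inE.
  exact: st.
by move=> /andP [/st -> /st ->].
Qed.

Lemma psi_mono (S T : {set gE G'}) : S \subset T -> psi S \subset psi T.
Proof. move=> /subsetP st; apply/subsetP => e; rewrite !inE; exact: st. Qed.

Definition U (S : {set gE G}) : {set sub} := [set u : sub | val u \in S].

Lemma card_dec (S : {set gE G}) : #|S| = (e1 \in S) + (e2 \in S) + #|U S|.
Proof.
rewrite (cardsD1 e1) (cardsD1 e2 (S :\ e1)) in_setD1 eq_sym h12 /=.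
suff -> : #|S :\ e1 :\ e2| = #|U S| by rewrite addnA.
rewrite -(card_imset _ val_inj). apply: eq_card => e.
rewrite !in_setD1. apply/idP/imsetP.
  move=> /andP [ne2 /andP [ne1 eS]].
  have he : e \notin [set e1; e2] by rewrite !inE negb_or ne1 ne2.
  exists (Sub e he) => //. by rewrite inE.
move=> [u]; rewrite inE => uS ->. have := valP u; rewrite !inE negb_or => /andP [-> ->].
by rewrite uS.
Qed.

Lemma card_opt (S' : {set gE G'}) : #|S'| = ((None : gE G') \in S') + #|[set u : sub | Some u \in S']|.
Proof.
rewrite (cardsD1 None). congr (_ + _).
rewrite -[#|[set u : sub | _]|](card_imset _ (@Some_inj _)). apply: eq_card => o.
rewrite in_setD1. apply/idP/imsetP.
  case: o => [u|] //= hu. exists u => //; by rewrite inE.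
by move=> [u]; rewrite inE => hu ->.
Qed.

Lemma val_insubd_far (u : sub) : val (insubd a' (src (val u)) : gV G') = src (val u) /\
                                 val (insubd a' (tgt (val u)) : gV G') = tgt (val u).
Proof.
have := far_ok (valP u) => /andP [hs ht]. by rewrite !insubdK.
Qed.

Lemma insubd_v : (insubd a' v : gV G') = a'.
Proof. by rewrite /insubd insubN ?negbK. Qed.


Lemma inc1a : incident e1 (val a').
Proof. by case: ends1 => [[_ <-]|[_ <-]]; rewrite /incident eqxx ?orbT. Qed.
Lemma inc2b : incident e2 (val b').
Proof. by case: ends2 => [[_ <-]|[_ <-]]; rewrite /incident eqxx ?orbT. Qed.

Lemma conn_edge (H : graph) (S : {set gE H}) e : e \in S ->
  connect (adj_in S) (src e) (tgt e) /\ connect (adj_in S) (tgt e) (src e).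
Proof.
move=> he; split; apply: connect1; last rewrite adj_sym; exact: adj_edge.
Qed.

Definition hmap (S : {set gE G}) (x : gV G) : gV G' :=
  if x == v then (if e1 \in S then a' else b') else insubd a' x.

Lemma hmap_val (S : {set gE G}) (x : gV G') : hmap S (val x) = x.
Proof. by rewrite /hmap (negbTE (valP x)) valKd. Qed.

Lemma hmap_far (S : {set gE G}) (u : sub) : hmap S (src (val u)) = @src G' (Some u) /\
                              hmap S (tgt (val u)) = @tgt G' (Some u).
Proof. have := far_ok (valP u) => /andP [hs ht]. by rewrite /hmap (negbTE hs) (negbTE ht). Qed.

Lemma phi_edge (S : {set gE G}) e : e \in S -> connect (adj_in (phi S)) (hmap S (src e)) (hmap S (tgt e)).
Proof.
move=> eS. case: (boolP (e \in [set e1; e2])) => he.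
- move: he eS; rewrite !inE => /orP [] /eqP -> eS.
  + by case: ends1 => [[-> ->]|[-> ->]]; rewrite hmap_val /hmap eqxx eS; exact: connect0.
  + case: (boolP (e1 \in S)) => h1.
    * have hN : (None : gE G') \in phi S by rewrite inE h1 eS.
      have [c1 c2] := conn_edge hN.
      by case: ends2 => [[-> ->]|[-> ->]]; rewrite hmap_val /hmap eqxx h1; [exact: c1 | exact: c2].
    * by case: ends2 => [[-> ->]|[-> ->]]; rewrite hmap_val /hmap eqxx (negbTE h1); exact: connect0.
- have [hs ht] := hmap_far S (Sub e he). rewrite /= in hs ht. rewrite hs ht.
  apply: connect1; apply: (@adj_edge G' _ (Some (Sub e he))); by rewrite inE.
Qed.

Lemma phi_adj (S : {set gE G}) x y : adj_in S x y -> connect (adj_in (phi S)) (hmap S x) (hmap S y).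
Proof.
move=> /existsP [e /andP [eS /orP [/andP [/eqP <- /eqP <-]|/andP [/eqP <- /eqP <-]]]].
  exact: phi_edge.
rewrite (sym_connect_sym (@adj_sym _ _)). exact: phi_edge.
Qed.

Lemma phi_cX (S : {set gE G}) : cX S -> cX (phi S).
Proof.
move=> /and3P [prS scS rkS].
have c_v : (e1 \in S) || (e2 \in S) -> v \in sub_vertices S.
  by case/orP => h; [exact: in_verts h i1 | exact: in_verts h i2].
have vert : forall x : gV G', x \in sub_vertices (phi S) -> val x \in sub_vertices S.
  move=> x; rewrite inE => /existsP [[u|] /andP [ho hi]]; move: ho; rewrite inE.
  - move=> uS. move: hi; rewrite /incident. have [hs ht] := val_insubd_far u.
    case/orP => /eqP <-; apply: (in_verts uS); rewrite /incident /= ?hs ?ht eqxx ?orbT //.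
  - move=> /andP [h1 h2]. move: hi; rewrite /incident /=.
    case/orP => /eqP <-; [exact: in_verts h1 inc1a | exact: in_verts h2 inc2b].
have E1 := card_dec S.
have E2 : #|phi S| = ((e1 \in S) && (e2 \in S)) + #|U S|.
  rewrite card_opt inE; congr (_ + _); apply: eq_card => u; by rewrite !inE.
have E3 : #|sub_vertices (phi S)| <= #|sub_vertices S :\ v|.
  rewrite -(card_imset _ val_inj); apply: subset_leq_card; apply/subsetP => y.
  by move=> /imsetP [x hx ->]; rewrite in_setD1 (valP x) vert.
have E4 := cardsD1 v (sub_vertices S).
have E5 : ((e1 \in S) || (e2 \in S)) <= (v \in sub_vertices S).
  by case h: ((e1 \in S) || (e2 \in S)) => //=; rewrite c_v.
have E6 : ((e1 \in S) || (e2 \in S)) + ((e1 \in S) || (e2 \in S)) <= #|sub_vertices S|.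
  case h: ((e1 \in S) || (e2 \in S)) => //=.
  case/orP: h => h.
  + have : [set v; val a'] \subset sub_vertices S.
      by apply/subsetP => y; rewrite in_set2 => /orP [] /eqP ->;
        [exact: in_verts h i1 | exact: in_verts h inc1a].
    by move/subset_leq_card; rewrite cards2 eq_sym (valP a').
  + have : [set v; val b'] \subset sub_vertices S.
      by apply/subsetP => y; rewrite in_set2 => /orP [] /eqP ->;
        [exact: in_verts h i2 | exact: in_verts h inc2b].
    by move/subset_leq_card; rewrite cards2 eq_sym (valP b').
have rk : #|sub_vertices S| < #|S| + 1 by move: rkS; rewrite /pi1_rank subn_gt0.
have V0 : 0 < #|sub_vertices S| by case/andP: scS.
have P0 : 0 < #|phi S|.
  move: E1 E2 E6 rk V0; case: (e1 \in S); case: (e2 \in S) => /=; lia.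
have RK : #|sub_vertices (phi S)| < #|phi S| + 1.
  move: E1 E2 E3 E4 E5 rk.
  case: (e1 \in S); case: (e2 \in S); case: (v \in sub_vertices S) => /=; lia.
apply/and3P; split.
- move/properT_ex: prS => [e he]. apply/properT_ex.
  case: (boolP (e \in [set e1; e2])) => h.
  + exists None. rewrite inE. move: h he; rewrite in_set2 => /orP [] /eqP -> he;
      by rewrite (negbTE he) ?andbF.
  + exists (Some (Sub e h)). by rewrite inE.
- apply: sub_conn_I.
    move: P0; rewrite card_gt0 => /set0Pn [o ho]. exists (@src G' o).
    by apply: (in_verts ho); rewrite /incident eqxx.
  move=> x y hx hy.
  have := connect_hom (@phi_adj S) (sub_conn_P scS (vert _ hx) (vert _ hy)).
  by rewrite !hmap_val.
- by rewrite /pi1_rank subn_gt0.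
Qed.

Lemma psi_None (S' : {set gE G'}) : ((e1 \in psi S') = ((None : gE G') \in S')) /\
                                    ((e2 \in psi S') = ((None : gE G') \in S')).
Proof. by rewrite !inE !insubN ?negbK ?e1_in ?e2_in. Qed.

Lemma psi_Some (S' : {set gE G'}) (u : sub) : (val u \in psi S') = (Some u \in S').
Proof. by rewrite inE valK. Qed.

Lemma psi_edge (S' : {set gE G'}) o : o \in S' ->
  connect (adj_in (psi S')) (val (@src G' o)) (val (@tgt G' o)).
Proof.
case: o => [u|] ho.
- have [hs ht] := val_insubd_far u. rewrite /= hs ht.
  apply: connect1; apply: adj_edge; by rewrite psi_Some.
- have [n1 n2] := psi_None S'. rewrite -n1 in ho. have ho2 : e2 \in psi S' by rewrite n2 -n1.
  have [c1 c2] := conn_edge ho. have [d1 d2] := conn_edge ho2.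
  apply: (@connect_trans _ _ v).
    by case: ends1 c1 c2 => [[-> ->]|[-> ->]].
  by case: ends2 d1 d2 => [[-> ->]|[-> ->]].
Qed.

Lemma psi_adj (S' : {set gE G'}) x y : adj_in S' x y -> connect (adj_in (psi S')) (val x) (val y).
Proof.
move=> /existsP [e /andP [eS /orP [/andP [/eqP <- /eqP <-]|/andP [/eqP <- /eqP <-]]]].
  exact: psi_edge.
rewrite (sym_connect_sym (@adj_sym _ _)). exact: psi_edge.
Qed.

Lemma psi_cX (S' : {set gE G'}) : cX S' -> cX (psi S').
Proof.
move=> /and3P [prS scS rkS].
have [n1 n2] := psi_None S'.
have vert2 : forall x : gV G', x \in sub_vertices S' -> val x \in sub_vertices (psi S').
  move=> x; rewrite inE => /existsP [[u|] /andP [ho hi]].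
  - rewrite -psi_Some in ho. move: hi; rewrite /incident. have [hs ht] := val_insubd_far u.
    case/orP => /eqP <-; apply: (in_verts ho); rewrite /incident /= ?hs ?ht eqxx ?orbT //.
  - move: hi; rewrite /incident /=.
    case/orP => /eqP <-; [apply: in_verts inc1a | apply: in_verts inc2b]; by rewrite ?n1 ?n2.
have vert : forall x, x \in sub_vertices (psi S') ->
    (x = v /\ (None : gE G') \in S') \/ exists2 x' : gV G', x' \in sub_vertices S' & x = val x'.
  move=> x; rewrite inE => /existsP [e /andP [eS hi]].
  case: (boolP (e \in [set e1; e2])) => he.
  - have hN : (None : gE G') \in S'.
      by move: he eS; rewrite in_set2 => /orP [] /eqP ->; rewrite ?n1 ?n2.
    have aV : a' \in sub_vertices S' by apply: (in_verts hN); rewrite /incident eqxx.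
    have bV : b' \in sub_vertices S' by apply: (in_verts hN); rewrite /incident eqxx orbT.
    move: he hi; rewrite in_set2 => /orP [] /eqP -> hi.
    + move: hi; rewrite /incident; case: ends1 => [[-> ->]|[-> ->]] => /orP [] /eqP <-;
        first [by left | by right; exists a'].
    + move: hi; rewrite /incident; case: ends2 => [[-> ->]|[-> ->]] => /orP [] /eqP <-;
        first [by left | by right; exists b'].
  - right. have [hs ht] := val_insubd_far (Sub e he). rewrite /= in hs ht.
    have hS : Some (Sub e he) \in S' by rewrite -psi_Some.
    move: hi; rewrite /incident => /orP [] /eqP <-.
    + exists (insubd a' (src e)) => //. apply: (in_verts hS). by rewrite /incident eqxx.
    + exists (insubd a' (tgt e)) => //. apply: (in_verts hS). by rewrite /incident eqxx orbT.
have E1 := card_dec (psi S').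
have E2 := card_opt S'.
have E3 : #|U (psi S')| = #|[set u : sub | Some u \in S']|.
  apply: eq_card => u; by rewrite !inE valK.
have E4 : #|sub_vertices (psi S')| <= ((None : gE G') \in S') + #|sub_vertices S'|.
  case hN: ((None : gE G') \in S') => /=.
  + apply: (@leq_trans #|v |: [set val x | x in sub_vertices S']|).
      apply: subset_leq_card; apply/subsetP => x /vert [[-> _]|[x' hx' ->]].
        by rewrite setU11.
      by rewrite setU1r // imset_f.
    by rewrite cardsU1 (card_imset _ val_inj) leq_add2r leq_b1.
  + rewrite -(card_imset _ val_inj). apply: subset_leq_card; apply/subsetP => x.
    move/vert => [[_ ]|[x' hx' ->]]; [by rewrite hN | exact: imset_f].
have rk : #|sub_vertices S'| < #|S'| + 1 by move: rkS; rewrite /pi1_rank subn_gt0.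
have RK : #|sub_vertices (psi S')| < #|psi S'| + 1.
  move: E1 E2 E3 E4 rk; rewrite n1 n2; case: ((None : gE G') \in S') => /=; lia.
apply/and3P; split.
- move/properT_ex: prS => [[u|] hu]; apply/properT_ex.
    by exists (val u); rewrite psi_Some.
  by exists e1; rewrite n1.
- apply: sub_conn_I.
    move: scS => /andP []; rewrite card_gt0 => /set0Pn [x hx] _.
    exists (val x); exact: vert2.
  have toV : forall x, x \in sub_vertices (psi S') -> exists2 x' : gV G',
      x' \in sub_vertices S' & connect (adj_in (psi S')) x (val x').
    move=> x /vert [[-> hN]|[x' hx' ->]]; last by exists x'.
    exists a'. by apply: (in_verts hN); rewrite /incident eqxx.
    have hh : e1 \in psi S' by rewrite n1.
    have [c1 c2] := conn_edge hh.
    by case: ends1 c1 c2 => [[-> ->]|[-> ->]].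
  move=> x y hx hy.
  have [x' hx' cx] := toV _ hx. have [y' hy' cy] := toV _ hy.
  apply: connect_trans cx _.
  apply: (@connect_trans _ _ (val y')).
    have := connect_hom (@psi_adj S') (sub_conn_P scS hx' hy'). by [].
  by rewrite (sym_connect_sym (@adj_sym _ _)).
- by rewrite /pi1_rank subn_gt0.
Qed.

End GraphPart.

Lemma Rplus_assoc' : associative Rplus. Proof. move=> a b c; by rewrite Rplus_assoc. Qed.
HB.instance Definition _ := Monoid.isComLaw.Build R R0 Rplus Rplus_assoc' Rplus_comm Rplus_0_l.
Local Open Scope R_scope.
Lemma rsum_const (I : finType) (c : R) : \big[Rplus/0]_(i : I) c = INR #|I| * c.
Proof.
rewrite cardT -big_enum /=. elim: (enum I) => [|a s IH]; first by rewrite big_nil /=; lra.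
rewrite big_cons IH. change (size (a::s)) with (S (size s)). rewrite S_INR. lra.
Qed.

Lemma rsum_ge0 (I : finType) (P : pred I) (F : I -> R) :
  (forall i, P i -> 0 <= F i) -> 0 <= \big[Rplus/0]_(i | P i) F i.
Proof. move=> H; apply: (big_ind (fun a => 0 <= a)) => //; [lra | move=> a b; lra]. Qed.

Lemma rsum_le (I : finType) (P : pred I) (F G : I -> R) :
  (forall i, P i -> F i <= G i) ->
  \big[Rplus/0]_(i | P i) F i <= \big[Rplus/0]_(i | P i) G i.
Proof. move=> H; apply: (big_ind2 (fun a b => a <= b)) => //; [lra| move=> a b c d; lra]. Qed.

Lemma rsum_abs (I : finType) (P : pred I) (F : I -> R) :
  Rabs (\big[Rplus/0]_(i | P i) F i) <= \big[Rplus/0]_(i | P i) Rabs (F i).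
Proof.
apply: (big_ind2 (fun a b => Rabs a <= b)) => //.
- rewrite Rabs_R0; lra.
- move=> a b c d h1 h2. have := Rabs_triang a c. lra.
- move=> i _; lra.
Qed.

Lemma rsum_sub (I : finType) (P : pred I) (F G : I -> R) :
  \big[Rplus/0]_(i | P i) F i - \big[Rplus/0]_(i | P i) G i =
  \big[Rplus/0]_(i | P i) (F i - G i).
Proof.
apply: (big_ind3 (fun a b c => a - b = c)) => //.
- lra.
- move=> a b c d e f h1 h2. lra.
Qed.

Lemma rsum_bound (I : finType) (P : pred I) (F : I -> R) (c : R) :
  0 <= c -> (forall i, P i -> Rabs (F i) <= c) ->
  Rabs (\big[Rplus/0]_(i | P i) F i) <= INR #|I| * c.
Proof.
move=> c0 H. apply: Rle_trans (rsum_abs _ _) _.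
apply: Rle_trans (_ : \big[Rplus/0]_(i | P i) c <= _). exact: rsum_le.
rewrite -rsum_const [X in _ <= X](bigID P) /=.
have := @rsum_ge0 I (fun i => ~~ P i) (fun _ => c) (fun _ _ => c0). lra.
Qed.

Lemma rsum_pos_ex (I : finType) (P : pred I) (F : I -> R) :
  0 < \big[Rplus/0]_(i | P i) F i -> exists i, P i /\ 0 < F i.
Proof.
move=> H. apply: NNPP => N.
have h0 : \big[Rplus/0]_(i | P i) (fun _ => 0) i = 0 by rewrite big1.
have : \big[Rplus/0]_(i | P i) F i <= \big[Rplus/0]_(i | P i) (fun _ => 0) i.
  apply: rsum_le => i Pi. apply: Rnot_lt_le => h; apply: N; by exists i.
lra.
Qed.

Lemma rsum_subset (I : finType) (A B : pred I) (F : I -> R) (q : I) :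
  (forall i, 0 <= F i) -> (forall i, A i -> B i) -> B q -> ~~ A q ->
  \big[Rplus/0]_(i | A i) F i + F q <= \big[Rplus/0]_(i | B i) F i.
Proof.
move=> F0 AB Bq Aq. rewrite [X in _ <= X](bigD1 q) //= Rplus_comm.
apply: Rplus_le_compat_l.
rewrite big_mkcond [X in _ <= X]big_mkcond. apply: rsum_le => i _ /=. have := F0 i.
case Ai: (A i); case Bi: (B i); case: eqP => [eqiq|_] /=; try lra.
- by move: Aq; rewrite -eqiq Ai.
- by have := AB _ Ai; rewrite Bi.
- by have := AB _ Ai; rewrite Bi.
Qed.

Definition push (T U : finType) (f : T -> U) (x : T -> R) : U -> R :=
  fun u => \big[Rplus/0]_(t | f t == u) x t.

Lemma push_sum (T U : finType) (f : T -> U) (x : T -> R) :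
  \big[Rplus/0]_(u : U) push f x u = \big[Rplus/0]_(t : T) x t.
Proof. by rewrite (partition_big f predT). Qed.

Lemma push_comp (T U W : finType) (f : T -> U) (g : U -> W) (x : T -> R) :
  push g (push f x) = push (fun t => g (f t)) x.
Proof.
apply: functional_extensionality => w; rewrite /push.
rewrite [RHS](partition_big f (fun u => g u == w)) //.
apply: eq_bigr => u /eqP <-. apply: eq_bigl => t.
by case: eqP => [->|]; rewrite ?eqxx ?andbF ?andbT.
Qed.

Lemma push_id (T : finType) (x : T -> R) : push (fun t => t) x = x.
Proof. apply: functional_extensionality => u; by rewrite /push big_pred1_eq. Qed.

Lemma real_pos (T : finType) (P : pred T) le x t :
  realization P le x -> 0 < x t -> P t.
Proof.
move=> [x0 [xP _]] h. case Pt: (P t) => //. have := xP t; rewrite Pt => /(_ isT). lra.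
Qed.

Lemma real_push (T U : finType) (P : pred T) (Q : pred U) (le : rel T) (le' : rel U)
  (f : T -> U) x :
  (forall t, P t -> Q (f t)) ->
  (forall s t, P s -> P t -> le s t -> le' (f s) (f t)) ->
  realization P le x -> realization Q le' (push f x).
Proof.
move=> PQ mono X; have X' := X; case: X' => [x0 [xP [xs xc]]]; split; [|split; [|split]].
- move=> u; apply: rsum_ge0 => t _; exact: x0.
- move=> u Qu; rewrite /push big1 // => t /eqP ftu. apply: xP; apply/negP => Pt.
  by move: Qu; rewrite -ftu PQ.
- by rewrite push_sum.
- move=> u w /rsum_pos_ex [s [/eqP <- hs]] /rsum_pos_ex [t [/eqP <- ht]].
  have Ps := real_pos X hs; have Pt := real_pos X ht.
  case: (xc s t hs ht) => h; [left|right]; exact: mono.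
Qed.

Lemma small_lt (n e c : R) : 0 < e -> 0 <= n -> 0 < c -> n <= c - 1 -> n * (e / c) < e.
Proof.
move=> he hn hc hnc. have hd : e / c * c = e by field; lra.
have : 0 < e / c by apply: Rdiv_lt_0_compat.
nra.
Qed.

Lemma cont_push (T U : finType) (A : (T -> R) -> Prop) (f : T -> U) :
  continuous_on A (push f).
Proof.
move=> x _ eps he. have n0 := pos_INR #|T|.
have hd : 0 < eps / (INR #|T| + 1) by apply: Rdiv_lt_0_compat => //; lra.
exists (eps / (INR #|T| + 1)); split => // y _ hy u.
rewrite /push rsum_sub.
apply: Rle_lt_trans (rsum_bound (c := eps / (INR #|T| + 1)) _ _) _.
- lra.
- move=> t _; left; exact: hy.
- apply: small_lt => //; lra.
Qed.

Lemma Rmin_lip a b c d : Rabs (Rmin a b - Rmin c d) <= Rabs (a - c) + Rabs (b - d).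
Proof. unfold Rmin; destruct Rle_dec; destruct Rle_dec; unfold Rabs; repeat destruct Rcase_abs; lra. Qed.
Lemma Rmax_lip a b c d : Rabs (Rmax a b - Rmax c d) <= Rabs (a - c) + Rabs (b - d).
Proof. unfold Rmax; destruct Rle_dec; destruct Rle_dec; unfold Rabs; repeat destruct Rcase_abs; lra. Qed.

Section Hom.
Variable E : finType.
Local Notation ST := {set E}.

Definition mu (t : R) (x : ST -> R) (p : ST) : R :=
  Rmin (x p) (Rmax 0 ((1 - t) - \big[Rplus/0]_(r : ST | (#|r| < #|p|)%N) x r)).
Definition hom (f : ST -> ST) (t : R) (x : ST -> R) : ST -> R :=
  fun q => \big[Rplus/0]_(p | f p == q) mu t x p + (x q - mu t x q).

Lemma mu_ge0 t x p : 0 <= x p -> 0 <= mu t x p.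
Proof. rewrite /mu; unfold Rmin, Rmax; repeat destruct Rle_dec; lra. Qed.
Lemma mu_le t x p : mu t x p <= x p.
Proof. rewrite /mu; unfold Rmin, Rmax; repeat destruct Rle_dec; lra. Qed.
Lemma mu_pos t x p : 0 < mu t x p ->
  0 < x p /\ 0 < (1 - t) - \big[Rplus/0]_(r : ST | (#|r| < #|p|)%N) x r.
Proof. rewrite /mu; unfold Rmin, Rmax; repeat destruct Rle_dec; lra. Qed.
Lemma mu_lt t x q : mu t x q < x q ->
  (1 - t) - \big[Rplus/0]_(r : ST | (#|r| < #|q|)%N) x r < x q.
Proof. rewrite /mu; unfold Rmin, Rmax; repeat destruct Rle_dec; lra. Qed.

Lemma key (P : pred ST) t x p q :
  realization P (fun S T => S \subset T) x -> 0 < mu t x p -> mu t x q < x q ->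
  p \subset q.
Proof.
move=> [x0 [xP [xs xc]]] /mu_pos [hp hp2] hq.
have hq0 : 0 < x q by have := mu_ge0 t (x0 q); lra.
have hq2 := mu_lt hq.
case: (xc p q hp hq0) => // qp.
case: (eqVneq q p) => [-> // | nqp].
have lt: (#|q| < #|p|)%N by rewrite proper_card // properEneq nqp qp.
have h : \big[Rplus/0]_(r : ST | (#|r| < #|q|)%N) x r + x q <=
         \big[Rplus/0]_(r : ST | (#|r| < #|p|)%N) x r.
  apply: (@rsum_subset _ (fun r : ST => (#|r| < #|q|)%N) (fun r : ST => (#|r| < #|p|)%N) x q x0
  (fun r h => ltn_trans h lt) lt (negbT (ltnn _))).
exfalso; lra.
Qed.

Lemma real_hom (P : pred ST) f t x :
  (forall p, P p -> P (f p)) ->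
  (forall p q, P p -> P q -> p \subset q -> f p \subset f q) ->
  (forall p, P p -> f p \subset p) -> 0 <= t <= 1 ->
  realization P (fun S T => S \subset T) x ->
  realization P (fun S T => S \subset T) (hom f t x).
Proof.
move=> PP mono fle ht X. have X' := X. case: X' => [x0 [xP [xs xc]]].
have m0 := fun p => mu_ge0 t (x0 p). have ml := fun p => mu_le t x p.
split; [|split; [|split]].
- move=> q; rewrite /hom.
  have := rsum_ge0 (P := fun p => f p == q) (F := mu t x) (fun p _ => m0 p).
  have := ml q. lra.
- move=> q nPq. rewrite /hom big1.
    have := xP q nPq. have := m0 q; have := ml q. lra.
  move=> p /eqP fpq. case Pp: (P p). by move: nPq; rewrite -fpq PP.
  have := xP p; rewrite Pp => /(_ isT) h. have := m0 p; have := ml p; lra.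
- rewrite /hom big_split /=.
  have := push_sum f (mu t x); rewrite /push => ->.
  rewrite -rsum_sub xs. lra.
- move=> q1 q2 h1 h2.
  have cases: forall q, 0 < hom f t x q ->
      (exists p, f p = q /\ 0 < mu t x p) \/ mu t x q < x q.
    move=> q; rewrite /hom => h.
    case: (Rlt_le_dec 0 (\big[Rplus/0]_(p | f p == q) mu t x p)).
      by move=> /rsum_pos_ex [p [/eqP <- hp]]; left; exists p.
    move=> hle; right; lra.
  case: (cases _ h1) => [[p1 [<- hp1]]|hq1]; case: (cases _ h2) => [[p2 [<- hp2]]|hq2].
  + have xp1 : 0 < x p1 by have := ml p1; lra.
    have xp2 : 0 < x p2 by have := ml p2; lra.
    have Pp1 := real_pos X xp1; have Pp2 := real_pos X xp2.
    case: (xc p1 p2 xp1 xp2) => h; [left|right]; exact: mono.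
  + have xp1 : 0 < x p1 by have := ml p1; lra.
    have Pp1 := real_pos X xp1.
    left; exact: subset_trans (fle p1 Pp1) (key X hp1 hq2).
  + have xp2 : 0 < x p2 by have := ml p2; lra.
    have Pp2 := real_pos X xp2.
    right; exact: subset_trans (fle p2 Pp2) (key X hp2 hq1).
  + apply: xc; have := m0 q1; have := m0 q2; lra.
Qed.

Lemma hom1 (P : pred ST) f x : realization P (fun S T => S \subset T) x -> hom f 1 x = x.
Proof.
move=> [x0 _]. apply: functional_extensionality => q.
have mu0 : forall p, mu 1 x p = 0.
  move=> p; rewrite /mu.
  have : 0 <= \big[Rplus/0]_(r : ST | (#|r| < #|p|)%N) x r by apply: rsum_ge0.
  have := x0 p. unfold Rmin, Rmax; repeat destruct Rle_dec; lra.
rewrite /hom big1 ?mu0 //; lra.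
Qed.

Lemma hom0 (P : pred ST) f x : realization P (fun S T => S \subset T) x -> hom f 0 x = push f x.
Proof.
move=> [x0 [_ [xs _]]]. apply: functional_extensionality => q.
have mux : forall p, mu 0 x p = x p.
  move=> p; rewrite /mu.
  have : \big[Rplus/0]_(r : ST | (#|r| < #|p|)%N) x r + x p <= 1.
    rewrite -xs. exact: (@rsum_subset _ (fun r : ST => (#|r| < #|p|)%N) (fun _ => true) x p x0
    (fun _ _ => isT) isT (negbT (ltnn _))).
  have := x0 p. unfold Rmin, Rmax; repeat destruct Rle_dec; lra.
rewrite /hom /push. under eq_bigr do rewrite mux. by rewrite mux Rminus_diag Rplus_0_r.
Qed.

Lemma hom_cont f t x eps : 0 < eps -> exists delta, 0 < delta /\
  forall s y, Rabs (s - t) < delta -> (forall i, Rabs (y i - x i) < delta) ->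
  forall j, Rabs (hom f s y j - hom f t x j) < eps.
Proof.
move=> he. set n := INR #|{set E}|. have n0 : 0 <= n := pos_INR _.
set c := (n + 2) * (n + 2).
have c0 : 0 < c by rewrite /c; nra.
set d := eps / c.
have d0 : 0 < d by apply: Rdiv_lt_0_compat.
have dc : d * c = eps by rewrite /d; field; lra.
exists d; split => // s y hs hy j.
have hmu : forall p, Rabs (mu s y p - mu t x p) <= (n + 2) * d.
  move=> p; rewrite /mu.
  apply: Rle_trans (Rmin_lip _ _ _ _) _.
  have h1 := Rmax_lip 0 ((1 - s) - \big[Rplus/0]_(r : ST | (#|r| < #|p|)%N) y r)
               0 ((1 - t) - \big[Rplus/0]_(r : ST | (#|r| < #|p|)%N) x r).
  have h2 : Rabs (\big[Rplus/0]_(r : ST | (#|r| < #|p|)%N) y r -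
                  \big[Rplus/0]_(r : ST | (#|r| < #|p|)%N) x r) <= n * d.
    rewrite rsum_sub; apply: rsum_bound; first lra. move=> i _; left; exact: hy.
  have h3 := hy p.
  move: h1 h2 h3 hs. rewrite Rminus_diag Rabs_R0.
  set A := \big[Rplus/0]_(r | _) y r. set B := \big[Rplus/0]_(r | _) x r.
  unfold Rabs; repeat destruct Rcase_abs; lra.
rewrite /hom.
have hsum : Rabs (\big[Rplus/0]_(p | f p == j) mu s y p - \big[Rplus/0]_(p | f p == j) mu t x p)
   <= n * ((n + 2) * d).
  rewrite rsum_sub; apply: rsum_bound; first nra. move=> i _; exact: hmu.
have hj := hy j. have hmj := hmu j.
have key2 : n * ((n + 2) * d) + d + (n + 2) * d < c * d by rewrite /c; nra.
move: hsum hj hmj key2. rewrite Rmult_comm in dc. rewrite dc.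
set A := \big[Rplus/0]_(p | _) mu s y p. set B := \big[Rplus/0]_(p | _) mu t x p.
unfold Rabs; repeat destruct Rcase_abs; lra.
Qed.

Lemma homotopic_push (P : pred ST) f :
  (forall p, P p -> P (f p)) ->
  (forall p q, P p -> P q -> p \subset q -> f p \subset f q) ->
  (forall p, P p -> f p \subset p) ->
  homotopic (realization P (fun S T => S \subset T)) (realization P (fun S T => S \subset T))
    (push f) (fun x => x).
Proof.
move=> PP mono fle. exists (hom f). split; [|split; [|split]].
- move=> t x ht X; exact: real_hom.
- move=> t x ht X eps he. have [d [d0 hd]] := hom_cont f t x he.
  exists d; split => // s y _ _ hs hy j; exact: hd.
- move=> x X; exact: hom0 X.
- move=> x X; exact: hom1 X.
Qed.
End Hom.

Lemma homotopic_ext (I J : finType) (A : (I -> R) -> Prop) (B : (J -> R) -> Prop) F F' G :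
  homotopic A B F G -> (forall x, A x -> F x = F' x) -> homotopic A B F' G.
Proof.
move=> [H [h1 [h2 [h3 h4]]]] e. exists H; split; [|split; [|split]] => //.
move=> x Ax; rewrite -e //; exact: h3.
Qed.

Local Close Scope R_scope.

Theorem lemma4 (G : graph) (v : gV G) (e1 e2 : gE G) (a' b' : {x : gV G | x != v}) :
  connected_graph G ->
  valence v = 2 ->
  e1 != e2 -> incident e1 v -> incident e2 v ->
  val a' = other_end e1 v -> val b' = other_end e2 v ->
  homotopy_equivalent (@cX_space G) (@cX_space (smooth e1 e2 a' b')).
Proof.
move=> _ hval h12 i1 i2 ha hb.
pose ph := phi e1 e2 a' b'. pose ps := @psi G v e1 e2 a' b'.
have PHI : forall S, cX S -> cX (ph S) := fun S hS => phi_cX hval h12 i1 i2 ha hb hS.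
have PSI : forall S', cX S' -> cX (ps S') := fun S hS => psi_cX hval h12 i1 i2 ha hb hS.
exists (push ph), (push ps).
split; [|split; [|split; [|split; [|split]]]].
- move=> x; apply: real_push => //. move=> s t _ _; exact: phi_mono.
- move=> x; apply: real_push => //. move=> s t _ _; exact: psi_mono.
- exact: cont_push.
- exact: cont_push.
- apply: (homotopic_ext (F := push (fun S => ps (ph S)))).
    apply: homotopic_push.
    + move=> p hp; exact: PSI (PHI _ hp).
    + move=> p q _ _ h; exact: psi_mono (phi_mono _ _ _ _ h).
    + move=> p _; exact: psi_phi_sub.
  move=> x _; by rewrite push_comp.
- apply: (homotopic_ext (F := push (fun S => ph (ps S)))).
    apply: homotopic_push.
    + move=> p hp; exact: PHI (PSI _ hp).
    + move=> p q _ _ h; exact: phi_mono _ _ _ _ (psi_mono h).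
    + move=> p _; by rewrite /ph /ps phi_psi.
  move=> x _; by rewrite push_comp.
Qed.
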